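(* Let $\kappa$ be an algebraically closed field of characteristic zero, complete for a non-trivial non-Archimedean absolute value. Let $a,b\in\kappa$ with $a\ne0$ and $|a|\le1$, let $L(z)=az+b$, let $f\in\mathcal{A}(\kappa)$ be an entire function not identically zero, and let $m$ be a positive integer. Then for every $r>|b|/|a|$, $$m\!\left(r,\frac{f\circ L}{f}\right)=0,\qquad m\!\left(r,\frac{\Delta_L^mf}{f}\right)=0.$$
   Context: $\mathcal{A}(\kappa)$ is the ring of entire functions over $\kappa$ (power series converging on all of $\kappa$). For entire $g=\sum a_nz^n$, $\mu(r,g)=\max_n|a_n|r^n$; for $g/h$, $\mu(r,g/h)=\mu(r,g)/\mu(r,h)$; $m(r,F)=\log^+\mu(r,F)=\max\{0,\log\mu(r,F)\}$. $\Delta_Lf=f\circ L-f$ and $\Delta_L^mf=\Delta_L(\Delta_L^{m-1}f)$. *)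

(* Defs.v *)
From HB Require Import structures.
From mathcomp Require Import all_boot all_order all_algebra.
From mathcomp Require Import all_classical all_reals all_analysis.
Set Implicit Arguments. Unset Strict Implicit. Unset Printing Implicit Defensive.
Import Order.TTheory GRing.Theory Num.Theory.
Import numFieldNormedType.Exports.
Local Open Scope classical_set_scope.
Local Open Scope ring_scope.

Section NonArch.
Variables (R : realType) (K : fieldType) (v : K -> R).

Definition is_nonarch_abs : Prop :=
  [/\ forall x, 0 <= v x,
      forall x, v x = 0 <-> x = 0,
      forall x y, v (x * y) = v x * v y
    & forall x y, v (x + y) <= Num.max (v x) (v y)].

Definition nontrivial_abs : Prop := exists x, v x != 0 /\ v x != 1.

Definition Kcvg (u : nat -> K) (l : K) : Prop :=
  (fun n => v (u n - l)) @ \oo --> (0 : R).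

Definition Kcauchy (u : nat -> K) : Prop :=
  forall e : R, 0 < e -> exists N, forall m n, (N <= m)%N -> (N <= n)%N ->
    v (u m - u n) < e.

Definition complete_abs : Prop :=
  forall u : nat -> K, Kcauchy u -> exists l, Kcvg u l.

(* the limit of a sequence (0 if it does not converge) *)
Definition Klim (u : nat -> K) : K := xget 0 [set l | Kcvg u l].

Definition Ksum (t : nat -> K) : K := Klim (fun N => \sum_(i < N) t i).

(* A power series is represented by its coefficient sequence c : nat -> K.
   It is entire (converges on all of K) iff |c_n| r^n -> 0 for every r > 0. *)
Definition entire (c : nat -> K) : Prop :=
  forall r : R, 0 < r -> (fun n => v (c n) * r ^+ n) @ \oo --> (0 : R).

(* coefficients of g o L, L(z) = a z + b:
   (g o L)_k = sum_{n} g_n * C(n,k) a^k b^(n-k) *)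
Definition compL (a b : K) (g : nat -> K) : nat -> K :=
  fun k => Ksum (fun n => g n * ('C(n, k))%:R * a ^+ k * b ^+ (n - k)).

Definition DeltaL (a b : K) (g : nat -> K) : nat -> K :=
  fun k => compL a b g k - g k.

Definition DeltaLn (a b : K) (m : nat) (g : nat -> K) : nat -> K :=
  iter m (DeltaL a b) g.

Definition mu (r : R) (g : nat -> K) : R :=
  sup (range (fun n => v (g n) * r ^+ n)).

(* m(r, g/h) = log^+ (mu(r,g) / mu(r,h)) *)
Definition mlog (r : R) (g h : nat -> K) : R :=
  Num.max 0 (ln (mu r g / mu r h)).

End NonArch.

(* Main.v *)
Require Import Defs.
From HB Require Import structures.
From mathcomp Require Import all_boot all_order all_algebra.
From mathcomp Require Import all_classical all_reals all_analysis.
From mathcomp Require Import lra.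
Import Order.TTheory GRing.Theory Num.Theory.
Local Open Scope ring_scope.

Section Aux.
Variables (R : realType) (K : fieldType) (v : K -> R).
Hypothesis hv : is_nonarch_abs v.

Lemma v_ge0 x : 0 <= v x. Proof. by case: hv. Qed.
Lemma v0 : v 0 = 0. Proof. by case: hv => _ h _ _; exact: (proj2 (h 0) erefl). Qed.
Lemma vM x y : v (x * y) = v x * v y. Proof. by case: hv. Qed.
Lemma vD x y : v (x + y) <= Num.max (v x) (v y). Proof. by case: hv. Qed.

Lemma v1 : v 1 = 1.
Proof.
have h1 : v 1 != 0.
  by apply/eqP; case: hv => _ h _ _ /h /eqP; rewrite oner_eq0.
have e : v 1 * v 1 = v 1 * 1 by rewrite -vM !mulr1.
by apply: (mulfI h1).
Qed.

Lemma vN1 : v (-1) = 1.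
Proof.
have e : v (-1) * v (-1) = 1 by rewrite -vM mulrNN mulr1 v1.
have := v_ge0 (-1); nra.
Qed.

Lemma vN x : v (- x) = v x.
Proof. by rewrite -mulN1r vM vN1 mul1r. Qed.

Lemma vX x n : v (x ^+ n) = v x ^+ n.
Proof. elim: n => [|n IH]; first by rewrite !expr0 v1. by rewrite !exprS vM IH. Qed.

Lemma vnat n : v n%:R <= 1.
Proof.
elim: n => [|n IH]; first by rewrite v0.
rewrite -addn1 natrD; apply: le_trans (vD _ _) _.
by rewrite ge_max IH v1 lexx.
Qed.

Lemma vsum (t : nat -> K) B : 0 <= B -> (forall i, v (t i) <= B) ->
  forall N, v (\sum_(i < N) t i) <= B.
Proof.
move=> B0 ht; elim=> [|N IH]; first by rewrite big_ord0 v0.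
rewrite big_ord_recr /=; apply: le_trans (vD _ _) _.
by rewrite ge_max IH ht.
Qed.

Lemma vlim (u : nat -> K) B : 0 <= B -> (forall N, v (u N) <= B) ->
  v (Klim v u) <= B.
Proof.
move=> B0 hu; rewrite /Klim.
case: (pselect (exists l, Kcvg v u l)) => [ex|nex]; last first.
  by rewrite xgetPN ?v0 // => l Hl; apply: nex; exists l.
move: (xgetPex 0 ex); move: (xget _ _) => l Hl.
rewrite leNgt; apply/negP => Hlt.
have e0 : 0 < v l - B.
  by rewrite subr_gt0.
have [n Hn] := filter_ex (@cvgr_lt R nat \oo%classic _ _ 0 Hl _ e0).
have : v l <= Num.max (v (l - u n)) (v (u n)).
  by rewrite -[X in v X](subrK (u n)); apply: vD.
rewrite le_max => /orP[|]; last by move=> h; have := hu n; lra.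
rewrite -[v (l - u n)]vN opprB => h; lra.
Qed.

Lemma vKsum (t : nat -> K) B : 0 <= B -> (forall i, v (t i) <= B) ->
  v (Ksum v t) <= B.
Proof. move=> B0 ht; apply: vlim => //; exact: vsum. Qed.

Variables (a b : K) (r : R).
Hypothesis va1 : v a <= 1.
Hypothesis vbr : v b <= r.
Hypothesis r0 : 0 < r.

Lemma compL_bound (g : nat -> K) M : 0 <= M ->
  (forall n, v (g n) * r ^+ n <= M) ->
  forall k, v (compL v a b g k) * r ^+ k <= M.
Proof.
move=> M0 hg k.
have rk : 0 < r ^+ k by apply: exprn_gt0.
rewrite -ler_pdivlMr //.
apply: vKsum; first by apply: divr_ge0 => //; apply: ltW.
move=> n; rewrite ler_pdivlMr //.
case: (leqP k n) => kn; last first.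
  by rewrite bin_small // mulr0 mul0r mul0r v0 mul0r.
rewrite !vM !vX.
have hn := hg n.
have := vnat 'C(n, k); have := v_ge0 (g n); have := v_ge0 a; have := v_ge0 b.
have := v_ge0 ('C(n, k))%:R.
move=> c0 b0 a0 g0 c1.
have ak : v a ^+ k <= 1 by apply: exprn_ile1.
have bk : v b ^+ (n - k) <= r ^+ (n - k) by apply: lerXn2r; rewrite ?nnegrE // ltW.
have rn : r ^+ n = r ^+ k * r ^+ (n - k) by rewrite -exprD subnKC.
have ak0 : 0 <= v a ^+ k by apply: exprn_ge0.
have bk0 : 0 <= v b ^+ (n - k) by apply: exprn_ge0.
apply: le_trans hn.
rewrite rn.
set A := v a ^+ k; set Bb := v b ^+ (n - k); set G := v (g n); set C := v ('C(n, k))%:R.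
set P := r ^+ k; set Q := r ^+ (n - k).
have P0 : 0 <= P by apply: ltW.
have : G * C * A * Bb * P <= G * 1 * 1 * Q * P.
  apply: ler_wpM2r => //.
  apply: ler_pM => //; first by rewrite !mulr_ge0.
  apply: ler_pM => //; first by rewrite mulr_ge0.
  by apply: ler_pM.
move=> h; apply: (le_trans h); by rewrite !mulr1 -mulrA (mulrC Q).
Qed.

Lemma Delta_bound (g : nat -> K) M : 0 <= M ->
  (forall n, v (g n) * r ^+ n <= M) ->
  forall k, v (DeltaL v a b g k) * r ^+ k <= M.
Proof.
move=> M0 hg k.
have rk : 0 < r ^+ k by apply: exprn_gt0.
rewrite /DeltaL -ler_pdivlMr //; apply: le_trans (vD _ _) _.
rewrite vN ge_max !ler_pdivlMr // hg andbT.
exact: compL_bound.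
Qed.

Lemma DeltaLn_bound m (g : nat -> K) M : 0 <= M ->
  (forall n, v (g n) * r ^+ n <= M) ->
  forall k, v (DeltaLn v a b m g k) * r ^+ k <= M.
Proof.
move=> M0 hg; elim: m => [|m IH] //=.
exact: Delta_bound.
Qed.

End Aux.
Arguments v_ge0 {R K v}.
Arguments v0 {R K v}.
Arguments vM {R K v}.
Arguments vD {R K v}.
Arguments v1 {R K v}.
Arguments vN1 {R K v}.
Arguments vN {R K v}.
Arguments vX {R K v}.
Arguments vnat {R K v}.
Arguments vsum {R K v}.
Arguments vlim {R K v}.
Arguments vKsum {R K v}.
Arguments compL_bound {R K v}.
Arguments Delta_bound {R K v}.
Arguments DeltaLn_bound {R K v}.

Section SeqUb.
Import numFieldNormedType.Exports.
Local Open Scope classical_set_scope.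
Lemma seq_ub (R : realType) (u : nat -> R) : (u @ \oo --> (0:R)) -> has_ubound (range u).
Proof.
move=> h.
have h2 : cvgn u by apply/cvg_ex; exists 0.
case: (cvg_seq_bounded h2) => M [_ HM].
exists (M + 1) => _ [n _ <-].
have := HM (M + 1) ltac:(by rewrite ltrDl) n I.
by move=> /= /(le_trans (ler_norm _)).
Qed.
End SeqUb.

Theorem corollary2p2 (R : realType) (K : closedFieldType) (v : K -> R) :
  [pchar K] =i pred0 ->
  is_nonarch_abs v -> nontrivial_abs v -> complete_abs v ->
  forall (a b : K), a != 0 -> v a <= 1 ->
  forall f : nat -> K, entire v f -> (exists n, f n != 0) ->
  forall m : nat, (0 < m)%N ->
  forall r : R, v b / v a < r ->
    mlog v r (compL v a b f) f = 0 /\ mlog v r (DeltaLn v a b m f) f = 0.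
Proof.
move=> _ hv _ _ a b a0 va1 f ef [n0 fn0] m _ r hr.
have va0 : 0 < v a.
  rewrite lt_def (v_ge0 hv) andbT; apply/eqP => h.
  by case: hv => _ h2 _ _; move/h2: h; apply/eqP.
have vb0 := v_ge0 hv b.
have r0 : 0 < r by apply: le_lt_trans hr; apply: divr_ge0 => //; apply: ltW.
have vbr : v b <= r.
  move: hr; rewrite ltr_pdivrMr // => h.
  apply/ltW/(lt_le_trans h); rewrite -[X in _ <= X]mulr1; apply: ler_wpM2l => //; lra.
have hb : has_ubound (range (fun n => v (f n) * r ^+ n)).
  exact: seq_ub (ef r r0).
have hub : forall n, v (f n) * r ^+ n <= mu v r f.
  by move=> n; apply: ub_le_sup => //; exists n.
have mupos : 0 < mu v r f.
  apply: lt_le_trans (hub n0); apply: mulr_gt0; last by apply: exprn_gt0.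
  rewrite lt_def v_ge0 // andbT; apply/eqP => h.
  by case: hv => _ h2 _ _; move/h2: h; apply/eqP.
have M0 : 0 <= mu v r f by apply: ltW.
have key : forall g, (forall k, v (g k) * r ^+ k <= mu v r f) ->
    mlog v r g f = 0.
  move=> g hg; rewrite /mlog; apply/max_idPl; apply: ln_le0.
  rewrite ler_pdivrMr // mul1r; apply: ge_sup.
    by exists (v (g 0%N) * r ^+ 0); exists 0%N.
  by move=> _ [k _ <-].
split; apply: key.
  exact: compL_bound.
exact: DeltaLn_bound.
Qed.
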